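(* Let $n\ge 2$ and $k\ge 1$ be integers and put $t=\lceil n/(k+1)\rceil$. Let $A$ be the $(kt+1)\times n$ matrix with entries $A_{ij}=1$ if $i\le j\le \min(i+t-1,n)$ and $A_{ij}=0$ otherwise, for $1\le i\le kt+1$ and $1\le j\le n$. Then $A$ identifies all $k$-sparse vectors in $\mathbb{R}^n$. The support of every nonzero row of $A$ is a set of consecutive nodes, so $A$ is a feasible measurement matrix both for the line network $L_n$ and for the ring network $C_n$. Consequently $M^{L_n}_{k,n}\le k\lceil n/(k+1)\rceil+1$ and $M^{C_n}_{k,n}\le k\lceil n/(k+1)\rceil+1$.
   Context: Let $G=(V,E)$ be a simple undirected graph with $V=\{1,\dots,n\}$. A vector $x\in\mathbb{R}^n$ is associated with $G$, its $j$-th entry sitting at node $j$. A measurement matrix for $G$ is a matrix $A\in\{0,1\}^{m\times n}$ in which every nonzero row has a support $\{j: A_{ij}=1\}$ that induces a connected subgraph of $G$. A vector is $k$-sparse if it has at most $k$ nonzero entries. A matrix $A$ identifies all $k$-sparse vectors if $Ax_1\neq Ax_2$ for every two distinct $k$-sparse vectors $x_1,x_2$. $M^G_{k,n}$ is the minimum number of rows of a measurement matrix for $G$ that identifies all $k$-sparse vectors. The line network $L_n$ has edges $\{i,i+1\}$ for $1\le i\le n-1$. The ring network $C_n$ (with $n\ge 3$) additionally has the edge $\{n,1\}$. *)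

(* Defs.v *)
(* Nodes 1..n are represented by 'I_n (node j+1 <-> ordinal j). *)
From HB Require Import structures.
From mathcomp Require Import all_boot all_order all_algebra.
Set Implicit Arguments. Unset Strict Implicit. Unset Printing Implicit Defensive.
Import Order.TTheory GRing.Theory Num.Theory.

Definition line_graph (n : nat) : rel 'I_n :=
  fun i j => (i.+1 == j :> nat) || (j.+1 == i :> nat).

(* Ring network C_n (meaningful for n >= 3): line edges plus {n,1}. *)
Definition ring_graph (n : nat) : rel 'I_n :=
  fun i j => line_graph i j
    || ((i == 0 :> nat) && (j == n.-1 :> nat))
    || ((j == 0 :> nat) && (i == n.-1 :> nat)).

Definition induces_connected (n : nat) (G : rel 'I_n) (S : {set 'I_n}) : Prop :=
  forall x y, x \in S -> y \in S ->
    connect (fun a b => [&& a \in S, b \in S & G a b]) x y.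

Definition measurement_matrix (n m : nat) (G : rel 'I_n) (A : 'M[bool]_(m, n)) : Prop :=
  forall i : 'I_m, (exists j, A i j) -> induces_connected G [set j | A i j].

Definition meas_apply (R : realFieldType) (m n : nat) (A : 'M[bool]_(m, n))
  (x : 'cV[R]_n) : 'cV[R]_m := map_mx (fun b : bool => (b%:R : R)%R) A *m x.

Definition k_sparse (R : realFieldType) (n k : nat) (x : 'cV[R]_n) : Prop :=
  (#|[set j : 'I_n | x j ord0 != 0%R]| <= k)%N.

Definition identifies (R : realFieldType) (k m n : nat) (A : 'M[bool]_(m, n)) : Prop :=
  forall x1 x2 : 'cV[R]_n, k_sparse k x1 -> k_sparse k x2 -> x1 <> x2 ->
    meas_apply A x1 <> meas_apply A x2.

(* "m = M^G_{k,n}": m is the minimum number of rows of a measurement matrix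
   for G identifying all k-sparse vectors over R. *)
Definition is_M (R : realFieldType) (n : nat) (G : rel 'I_n) (k m : nat) : Prop :=
  (exists A : 'M[bool]_(m, n), measurement_matrix G A /\ identifies R k A) /\
  (forall (m' : nat) (A : 'M[bool]_(m', n)),
      measurement_matrix G A -> identifies R k A -> (m <= m')%N).

(* The matrix of the statement (0-indexed): A i j = 1 iff i <= j <= i+t-1. *)
Definition ceil_div (n d : nat) : nat := (n + d.-1) %/ d.

Definition band_matrix (n k : nat) : 'M[bool]_(k * ceil_div n k.+1 + 1, n) :=
  \matrix_(i, j) ((i <= j)%N && (j < i + ceil_div n k.+1)%N).

(* Main.v *)
Require Import Defs.
From HB Require Import structures.
From mathcomp Require Import all_boot all_order all_algebra.
From mathcomp Require Import zify ring lra.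
Set Implicit Arguments. Unset Strict Implicit. Unset Printing Implicit Defensive.
Import Order.TTheory GRing.Theory Num.Theory.

Lemma interval_connected n (G : rel 'I_n) (lo hi : nat) :
  (forall a b : 'I_n, line_graph a b -> G a b) ->
  induces_connected G [set j : 'I_n | (lo <= j)%N && (j < hi)%N].
Proof.
move=> hG.
set S := [set j : 'I_n | _].
set e := (fun a b => [&& a \in S, b \in S & G a b]).
suff H : forall d (x y : 'I_n), x \in S -> y \in S -> y = x + d :> nat ->
   connect e x y /\ connect e y x.
  move=> x y xS yS.
  case: (leqP x y) => hxy.
    by case: (H (y - x) x y xS yS ltac:(lia)).
  by case: (H (x - y) y x yS xS ltac:(lia)).
elim=> [|d IH] x y xS yS hy.
  have -> : y = x by apply: val_inj; rewrite /= hy addn0.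
  by split; apply: connect0.
have hyn : (x + d < n)%N by have := ltn_ord y; lia.
pose y' : 'I_n := Ordinal hyn.
have y'S : y' \in S.
  move: xS yS; rewrite !inE /= => /andP[h1 h2] /andP[h3 h4].
  apply/andP; split; lia.
case: (IH x y' xS y'S erefl) => c1 c2.
have e1 : e y' y.
  rewrite /e y'S yS /=; apply: hG; rewrite /line_graph /= hy addnS eqxx //.
have e2 : e y y'.
  rewrite /e y'S yS /=; apply: hG; rewrite /line_graph /= hy addnS eqxx orbT //.
split.
  exact: connect_trans c1 (connect1 e1).
exact: connect_trans (connect1 e2) c2.
Qed.

Lemma band_mm n k (G : rel 'I_n) :
  (forall a b : 'I_n, line_graph a b -> G a b) ->
  measurement_matrix G (band_matrix n k).
Proof.
move=> hG i _.
have -> : [set j | band_matrix n k i j] =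
   [set j : 'I_n | (i <= j)%N && (j < i + ceil_div n k.+1)%N].
  by apply/setP => j; rewrite !inE mxE.
exact: interval_connected.
Qed.

Definition xext (R : realFieldType) n (x : 'cV[R]_n) (j : nat) : R :=
  oapp (fun o : 'I_n => x o ord0) 0%R (insub j).

Lemma xext_ge (R : realFieldType) n (x : 'cV[R]_n) j : (n <= j)%N -> xext x j = 0%R.
Proof. by move=> h; rewrite /xext insubN // -leqNgt. Qed.

Lemma xext_val (R : realFieldType) n (x : 'cV[R]_n) (o : 'I_n) : xext x o = x o ord0.
Proof. by rewrite /xext valK. Qed.

Lemma row_sum (R : realFieldType) n k (x : 'cV[R]_n) (i : 'I_(k * ceil_div n k.+1 + 1)) :
  meas_apply (band_matrix n k) x i ord0 =
  (\sum_(i <= j < i + ceil_div n k.+1) xext x j)%R.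
Proof.
set t := ceil_div n k.+1.
rewrite /meas_apply !mxE.
pose G := fun j : nat => ((((i <= j)%N && (j < i + t)%N) : nat)%:R * xext x j)%R.
transitivity (\sum_(j < n) G j)%R.
  by apply: eq_bigr => j _; rewrite !mxE /G /xext valK.
rewrite -(big_mkord (fun _ => true) G).
transitivity (\sum_(0 <= j < n + (i + t)) G j)%R.
  rewrite (@big_cat_nat _ _ _ n 0 (n + (i + t))) /= ?leq_addr //.
  rewrite [X in (_ = _ + X)%R]big1_seq ?addr0 //.
  move=> j /andP[_]; rewrite mem_index_iota => /andP[h _].
  by rewrite /G xext_ge // mulr0.
have h1 : (i <= i + t)%N by apply: leq_addr.
have h2 : (i + t <= n + (i + t))%N by apply: leq_addl.
rewrite (@big_cat_nat _ _ _ i 0 (n + (i + t))) /= ?(leq_trans h1 h2) //.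
rewrite (@big_cat_nat _ _ _ (i + t) i (n + (i + t))) /= //.
rewrite big1_seq ?add0r; last first.
  move=> j /andP[_]; rewrite mem_index_iota => /andP[_ h].
  by rewrite /G leqNgt h /= mul0r.
rewrite [X in (_ + X)%R]big1_seq ?addr0; last first.
  move=> j /andP[_]; rewrite mem_index_iota => /andP[h _].
  by rewrite /G ltnNge h andbF mul0r.
apply: eq_big_nat => j hj; by rewrite /G hj mul1r.
Qed.

Lemma ceil_bound n k : (n <= k.+1 * ceil_div n k.+1)%N.
Proof.
rewrite /ceil_div /=.
have := divn_eq (n + k) k.+1; have := ltn_pmod (n + k) (ltn0Sn k).
set q := (n + k) %/ k.+1; set r := (n + k) %% k.+1. lia.
Qed.

Lemma ceil_pos n k : (1 <= n)%N -> (0 < ceil_div n k.+1)%N.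
Proof. move=> hn; rewrite /ceil_div /= divn_gt0 //; lia. Qed.

Lemma band_identifies (R : realFieldType) n k : (2 <= n)%N ->
  identifies R k (band_matrix n k).
Proof.
move=> hn x1 x2 s1 s2 neq eqA.
set t := ceil_div n k.+1.
have tpos : (0 < t)%N by apply: ceil_pos; lia.
have nle : (n <= k.+1 * t)%N by apply: ceil_bound.
set d := (x1 - x2)%R.
have hA0 : meas_apply (band_matrix n k) d = 0%R.
  by rewrite /meas_apply mulmxBr -!/(meas_apply _ _) eqA subrr.
set z := xext d.
have hA : forall i, (i <= k * t)%N -> (\sum_(i <= j < i + t) z j = 0)%R.
  move=> i hi.
  have hi' : (i < k * t + 1)%N by rewrite addn1 ltnS.
  have := row_sum d (Ordinal (n:=k * t + 1) hi'); rewrite hA0 mxE /= => <-. done.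
have hp1 : forall i, (i < k * t)%N -> z i = z (i + t).
  move=> i hi.
  have a := hA i (ltnW hi); have b := hA i.+1 hi.
  rewrite big_ltn in a; last by lia.
  rewrite addSn big_nat_recr /= in b; last by lia.
  lra.
have hper : forall j r, (r < t)%N -> (j <= k)%N -> z (r + j * t) = z r.
  elim=> [|j IH] r hr hj; first by rewrite mul0n addn0.
  have -> : (r + j.+1 * t = (r + j * t) + t)%N by rewrite mulSn; lia.
  rewrite -hp1; first by apply: IH => //; lia.
  have : (j.+1 * t <= k * t)%N by rewrite leq_mul2r hj orbT.
  rewrite mulSn; lia.
have hsum : (\sum_(0 <= r < t) z r = 0)%R.
  have := hA (k * t) (leqnn _).
  rewrite -{1}(add0n (k * t)) big_addn addKn => h; apply: etrans h.
  by apply: eq_big_nat => r /andP[_ hr]; rewrite hper.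
have zlt : forall m, z m != 0%R -> (m < n)%N.
  by move=> m; apply: contraR; rewrite -leqNgt => h; rewrite /z xext_ge.
have [j0 hj0] : exists j0 : 'I_n, d j0 ord0 != 0%R.
  case: (boolP [exists j0 : 'I_n, d j0 ord0 != 0%R]) => [/existsP//|/existsPn H].
  exfalso; apply: neq; apply/eqP; rewrite -subr_eq0; apply/eqP.
  apply/matrixP => i j; rewrite (ord1 j) [RHS]mxE.
  by have := H i; rewrite negbK => /eqP.
set r0 := j0 %% t.
have r0t : (r0 < t)%N by apply: ltn_pmod.
have zr0 : z r0 != 0%R.
  have hq : (j0 %/ t <= k)%N by rewrite -ltnS ltn_divLR //; exact: leq_trans (ltn_ord j0) nle.
  by rewrite -(hper _ _ r0t hq) addnC -divn_eq /z xext_val.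
have [r1 [r1t r10 zr1]] : exists r1, [/\ (r1 < t)%N, r1 != r0 & z r1 != 0%R].
  case: (boolP [exists r : 'I_t, (val r != r0) && (z r != 0%R)]).
    by case/existsP => r /andP[h1 h2]; exists r; split.
  move=> /existsPn H; exfalso; move: zr0; apply/negP; rewrite negbK.
  move: hsum; rewrite big_mkord (bigD1 (Ordinal r0t)) //= big1 ?addr0 => [/eqP //|].
  move=> r hr; have := H r; rewrite negb_and negbK.
  have -> : (val r == r0) = false.
    by apply/negP => /eqP h; move: hr; rewrite (_ : r = Ordinal r0t) ?eqxx //; exact: val_inj.
  by rewrite /= negbK => /eqP.
pose rr := fun b : bool => if b then r1 else r0.
have rrt : forall b, (rr b < t)%N by case.
have zrr : forall b, z (rr b) != 0%R by case.
have key : forall b (j : 'I_k.+1), z (rr b + j * t) != 0%R.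
  by move=> b j; rewrite hper // -ltnS.
pose f := fun p : bool * 'I_k.+1 => insubd j0 (rr p.1 + p.2 * t) : 'I_n.
have fval : forall p, val (f p) = rr p.1 + p.2 * t.
  by move=> [b j]; rewrite /f insubdK //; apply: zlt; apply: key.
have finj : injective f.
  move=> [b j] [b' j'] /(congr1 val); rewrite !fval /= => h.
  have hr : rr b = rr b'.
    have := congr1 (modn^~ t) h; rewrite !(addnC (rr _)) !modnMDl !modn_small //.
  have hj : j = j' :> nat.
    have := congr1 (divn^~ t) h; rewrite !(addnC (rr _)) !divnMDl // !divn_small //.
    by rewrite !addn0.
  have -> : j = j' by apply: val_inj.
  case: b b' hr {h} => [] [] //= h; move: r10; by rewrite h eqxx.
set D := [set j : 'I_n | d j ord0 != 0%R].
have lo : (2 * k.+1 <= #|D|)%N.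
  have -> : (2 * k.+1 = #|f @: [set: bool * 'I_k.+1]|)%N.
    by rewrite card_imset // cardsT card_prod card_bool card_ord.
  apply: subset_leq_card; apply/subsetP => _ /imsetP[p _ ->].
  by rewrite inE -xext_val fval; apply: key.
set S1 := [set j : 'I_n | x1 j ord0 != 0%R].
set S2 := [set j : 'I_n | x2 j ord0 != 0%R].
have sub : D \subset S1 :|: S2.
  apply/subsetP => j; rewrite !inE /d mxE.
  case: (boolP (x1 j ord0 != 0%R)) => //= /negPn/eqP ->.
  by rewrite add0r mxE oppr_eq0.
have := subset_leq_card sub; rewrite cardsU.
move: s1 s2; rewrite /k_sparse -/S1 -/S2 => s1 s2.
move: lo; lia.
Qed.

Theorem theorem1 (R : realFieldType) (n k : nat) (hn : (2 <= n)%N) (hk : (1 <= k)%N) :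
  let t := ceil_div n k.+1 in
  identifies R k (band_matrix n k) /\
  measurement_matrix (@line_graph n) (band_matrix n k) /\
  ((3 <= n)%N -> measurement_matrix (@ring_graph n) (band_matrix n k)) /\
  (forall m, is_M R (@line_graph n) k m -> (m <= k * t + 1)%N) /\
  ((3 <= n)%N -> forall m, is_M R (@ring_graph n) k m -> (m <= k * t + 1)%N).
Proof.
move=> t.
have hid := @band_identifies R n k hn.
have hl : measurement_matrix (@line_graph n) (band_matrix n k) by apply: band_mm.
have hr : measurement_matrix (@ring_graph n) (band_matrix n k).
  by apply: band_mm => a b h; rewrite /ring_graph h.
split=> //; split=> //; split=> // ; split.
  by move=> m [_ H]; apply: H hl hid.
by move=> _ m [_ H]; apply: H hr hid.
Qed.
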